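(* Let $n,m,\ell,N,K\in\mathbb{N}$, let $(\Delta,\mathcal{D},\mathbb{P})$ be a probability space with $\Delta\subseteq\mathbb{R}^\ell$, and let $A:\mathbb{R}^\ell\to\mathbb{R}^{n\times n}$, $B:\mathbb{R}^\ell\to\mathbb{R}^{n\times m}$. Let $\mathscr{X}\subseteq\mathbb{R}^n$ be a C-set, $\mathscr{U}\subseteq\mathbb{R}^m$ a C-polytope, and $\mathcal{S}\subseteq\mathscr{X}$ a C-polytope with vertices $x_1,\dots,x_N$. Fix $\beta\in(0,1)$ and $\varepsilon:\{0,\dots,K\}\to[0,1]$ with $\varepsilon(K)=1$ and $\sum_{h=0}^{K-1}\binom{K}{h}(1-\varepsilon(h))^{K-h}=\beta$. Assume $\mathcal{L}_{\delta_K}\neq\emptyset$ for every $\delta_K\in\Delta^K$, and let $(\boldsymbol{C}^\star_K,\boldsymbol{d}^\star_K)=\Theta_K(\delta_K)$, $s_K=|\Upsilon_K(\delta_K)|$. Then, with $\mathbb{P}^K$-probability at least $1-\beta$ over $\delta_K$, the following holds: the $\mathbb{P}$-probability of the set of $\delta\in\Delta$ for which the vertex control law with vertex inputs $u_i=C^\star_{i,K}\delta+d^\star_{i,K}$, $i=1,\dots,N$, makes $\mathcal{S}$ controlled invariant for the system $x(t+1)=A(\delta)x(t)+B(\delta)u(t)$ (i.e. every closed-loop trajectory with $x(0)\in\mathcal{S}$ satisfies $u(t)\in\mathscr{U}$ and $x(t)\in\mathcal{S}$ for all $t\in\mathbb{N}$) is at least $1-\varepsilon(s_K)$.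
   Context: A C-set is a convex bounded set with the origin in its interior; a C-polytope is a polyhedral C-set. $\mathbb{P}^K$ is the product measure; $\delta_K=(\delta^{(1)},\dots,\delta^{(K)})$ are i.i.d. draws from $\mathbb{P}$. $\mathcal{M}$ is the set of pairs $(\boldsymbol{C},\boldsymbol{d})$, $\boldsymbol{C}=\mathrm{col}(C_1,\dots,C_N)$, $C_i\in\mathbb{R}^{m\times\ell}$, $\boldsymbol{d}=\mathrm{col}(d_1,\dots,d_N)$, $d_i\in\mathbb{R}^m$. For $\delta\in\Delta$, $\mathcal{L}_\delta=\{(\boldsymbol{C},\boldsymbol{d})\in\mathcal{M}: C_i\delta+d_i\in\mathscr{U},\ A(\delta)x_i+B(\delta)(C_i\delta+d_i)\in\mathcal{S}\ \forall i\}$ and $\mathcal{L}_{\delta_K}=\bigcap_{j}\mathcal{L}_{\delta^{(j)}}$. For each $p$, $\Theta_p:\Delta^p\to\mathcal{M}$ is a single-valued tie-break map selecting an element of the (nonempty) set $\mathcal{L}$ of its argument. A support subsample of $\delta_K$ is $(\delta^{(i_1)},\dots,\delta^{(i_p)})$, $i_1<\dots<i_p$, with $\Theta_p(\delta^{(i_1)},\dots,\delta^{(i_p)})=\Theta_K(\delta_K)$; $\Upsilon_K$ is any map returning the index set of a support subsample. Vertex control law with vertex inputs $u_1,\dots,u_N\in\mathbb{R}^m$: $u(t)=\sum_{i=1}^N\gamma^\star_i(t)u_i$, where $\gamma^\star(t)\in\operatorname{argmin}_{\gamma\in[0,1]^N}\{\mathbf{1}_N^\top\gamma : \sum_{i=1}^N\gamma_ix_i=x(t)\}$.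 *)

(* Defs.v *)
From HB Require Import structures.
From mathcomp Require Import all_boot all_order all_algebra.
From mathcomp Require Import all_classical all_reals all_analysis.
From Stdlib Require List.
Set Implicit Arguments. Unset Strict Implicit. Unset Printing Implicit Defensive.
Import Order.TTheory GRing.Theory Num.Theory.
Import numFieldNormedType.Exports.
Local Open Scope classical_set_scope.
Local Open Scope ring_scope.

Section Defs.
Variable R : realType.

Definition Cset (n : nat) (X : set 'cV[R]_n) : Prop :=
  convex_set (X : set (convex_lmodType 'cV[R]_n)) /\ bounded_set X /\ interior X 0.

Definition polyhedral (n : nat) (X : set 'cV[R]_n) : Prop :=
  exists (k : nat) (F : 'M[R]_(k, n)) (g : 'cV[R]_k),
    X = [set x | forall i : 'I_k, (F *m x) i 0 <= g i 0].

Definition Cpolytope (n : nat) (X : set 'cV[R]_n) : Prop :=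
  Cset X /\ polyhedral X.

Definition is_vertex (n : nat) (X : set 'cV[R]_n) (v : 'cV[R]_n) : Prop :=
  X v /\ forall (y z : 'cV[R]_n) (lam : R), X y -> X z -> 0 < lam -> lam < 1 ->
    v = lam *: y + (1 - lam) *: z -> y = z.

Definition vertices_of (n N : nat) (X : set 'cV[R]_n) (xs : 'I_N -> 'cV[R]_n) :=
  injective xs /\ forall v, is_vertex X v <-> exists i, v = xs i.

(** The pairs (C, d): C = col(C_1,..,C_N), d = col(d_1,..,d_N). *)
Definition Mset (m l N : nat) : Type := ('I_N -> 'M[R]_(m, l)) * ('I_N -> 'cV[R]_m).

Definition Lset (n m l N : nat) (A : 'cV[R]_l -> 'M[R]_n) (B : 'cV[R]_l -> 'M[R]_(n, m))
  (U : set 'cV[R]_m) (S : set 'cV[R]_n) (xs : 'I_N -> 'cV[R]_n)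
  (delta : 'cV[R]_l) : set (Mset m l N) :=
  [set c | forall i : 'I_N, U (c.1 i *m delta + c.2 i) /\
           S (A delta *m xs i + B delta *m (c.1 i *m delta + c.2 i))].

Definition Lseq (T : Type) (n m l N : nat) (iota : T -> 'cV[R]_l)
  (A : 'cV[R]_l -> 'M[R]_n) (B : 'cV[R]_l -> 'M[R]_(n, m))
  (U : set 'cV[R]_m) (S : set 'cV[R]_n) (xs : 'I_N -> 'cV[R]_n)
  (s : seq T) : set (Mset m l N) :=
  [set c | forall d, List.In d s -> Lset A B U S xs (iota d) c].

Definition vfeasible (n N : nat) (xs : 'I_N -> 'cV[R]_n) (x : 'cV[R]_n) (g : 'I_N -> R) :=
  (forall i, 0 <= g i <= 1) /\ \sum_(i < N) g i *: xs i = x.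
Definition vargmin (n N : nat) (xs : 'I_N -> 'cV[R]_n) (x : 'cV[R]_n) (g : 'I_N -> R) :=
  vfeasible xs x g /\
  forall g', vfeasible xs x g' -> \sum_(i < N) g i <= \sum_(i < N) g' i.

(** Stated on all finite trajectory prefixes so that no
    trajectory is excluded for lack of a continuation. *)
Definition vertex_law_invariant (n m N : nat) (Ad : 'M[R]_n) (Bd : 'M[R]_(n, m))
  (U : set 'cV[R]_m) (S : set 'cV[R]_n) (xs : 'I_N -> 'cV[R]_n)
  (us : 'I_N -> 'cV[R]_m) : Prop :=
  forall (Tf : nat) (x : nat -> 'cV[R]_n) (g : nat -> 'I_N -> R),
    S (x 0%N) ->
    (forall t, (t < Tf)%N ->
       vargmin xs (x t) (g t) /\
       x t.+1 = Ad *m x t + Bd *m (\sum_(i < N) g t i *: us i)) ->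
    S (x Tf) /\
    forall t, (t < Tf)%N -> U (\sum_(i < N) g t i *: us i).

(** Q is the K-fold product P^K on K-tuples (determined by its values on
    measurable rectangles, which generate the product sigma-algebra). *)
Definition is_product_prob (d : measure_display) (T : measurableType d) (K : nat)
  (P : probability T R) (Q : probability (K.-tuple T) R) : Prop :=
  forall Af : 'I_K -> set T, (forall i, measurable (Af i)) ->
    Q [set t | forall i, Af i (tnth t i)] = (\prod_(i < K) P (Af i))%E.

End Defs.

(* Main.v *)
Require Import Defs.
From HB Require Import structures.
From mathcomp Require Import all_boot all_order all_algebra.
From mathcomp Require Import all_classical all_reals all_analysis.
From mathcomp Require Import ring lra.
Import Order.TTheory GRing.Theory Num.Theory.
Import numFieldNormedType.Exports.
Local Open Scope classical_set_scope.
Local Open Scope ring_scope.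
Set Implicit Arguments. Unset Strict Implicit. Unset Printing Implicit Defensive.

Section PartA.
Variable R : realType.

Definition polyP (k n : nat) (F : 'M[R]_(k, n)) (g : 'cV[R]_k) (x : 'cV[R]_n) :=
  forall i : 'I_k, (F *m x) i 0 <= g i 0.

Lemma polyP_comb (k n N : nat) (F : 'M[R]_(k, n)) (g : 'cV[R]_k)
  (ys : 'I_N -> 'cV[R]_n) (w : 'I_N -> R) :
  polyP F g 0 -> (forall i, 0 <= w i) -> \sum_i w i <= 1 ->
  (forall i, polyP F g (ys i)) -> polyP F g (\sum_i w i *: ys i).
Proof.
move=> P0 w0 w1 Py j.
have g0 : 0 <= g j 0 by move: (P0 j); rewrite mulmx0 mxE.
rewrite mulmx_sumr summxE.
apply: (le_trans (y := \sum_i w i * g j 0)).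
  apply: ler_sum => i _; rewrite -scalemxAr mxE.
  by apply: ler_wpM2l => //; apply: Py.
by rewrite -mulr_suml; rewrite -[X in _ <= X]mul1r; apply: ler_wpM2r.
Qed.

Lemma polyP_entry (k n : nat) (F : 'M[R]_(k, n)) (a b : R) (x y : 'cV[R]_n) i :
  (F *m (a *: x + b *: y)) i 0 = a * (F *m x) i 0 + b * (F *m y) i 0.
Proof. by rewrite mulmxDr -!scalemxAr !mxE. Qed.

Section Mink.
Variables (k n N : nat) (F : 'M[R]_(k, n)) (g : 'cV[R]_k) (xs : 'I_N -> 'cV[R]_n).
Let S := polyP F g.
Hypothesis bnd : exists M : R, forall x, S x -> `|x| <= M.
Hypothesis vert : vertices_of S xs.

Let nt (x : 'cV[R]_n) := #|[pred i | (F *m x) i 0 < g i 0]|.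

Lemma unbounded_dir (x v : 'cV[R]_n) : S x -> v != 0 -> exists i, 0 < (F *m v) i 0.
Proof.
move=> Sx v0; apply/not_existsP => H.
have Hv i : (F *m v) i 0 <= 0 by rewrite leNgt; apply/negP => Hi; apply: (H i).
case: bnd => M HM.
have nv : 0 < `|v| by rewrite normr_gt0.
pose t := (`|M| + `|x| + 1) / `|v|.
have t0 : 0 <= t by rewrite divr_ge0.
have Sxt : S (x + t *: v).
  move=> i; rewrite mulmxDr -scalemxAr mxE [X in _ + X]mxE.
  have := Sx i; have := Hv i => h1 h2.
  have : t * (F *m v) i 0 <= 0 by rewrite mulr_ge0_le0.
  lra.
have := HM _ Sxt.
have := lerB_normD (t *: v) x.
rewrite normrZ ger0_norm // /t divfK ?gt_eqF // addrC.
  have := ler_norm M. move=> hM h3 h4. rewrite addrC in h4. lra.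
Qed.

Lemma step (x v : 'cV[R]_n) : S x -> (forall i, (F *m x) i 0 = g i 0 -> (F *m v) i 0 = 0) ->
  (exists i, 0 < (F *m v) i 0) ->
  exists t, 0 < t /\ S (x + t *: v) /\ (nt (x + t *: v) < nt x)%N.
Proof.
move=> Sx tight [i0 Hi0].
pose r i := (g i 0 - (F *m x) i 0) / (F *m v) i 0.
case: (arg_minP r (P := fun i => 0 < (F *m v) i 0) Hi0) => i Pi Hmin.
have nti : (F *m x) i 0 < g i 0.
  rewrite lt_neqAle Sx andbT; apply/eqP => /tight; move: Pi => /[swap] ->.
  by rewrite ltxx.
exists (r i); split; first by rewrite divr_gt0 // subr_gt0.
have Fxj j : (F *m (x + r i *: v)) j 0 = (F *m x) j 0 + r i * (F *m v) j 0.
  by rewrite mulmxDr -scalemxAr !mxE.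
split.
  move=> j; rewrite Fxj.
  case: (ltP 0 ((F *m v) j 0)) => Pj.
    have := Hmin j Pj; rewrite /r => h.
    rewrite -(ler_pM2r Pj) divfK ?gt_eqF // in h.
    lra.
  have : r i * (F *m v) i 0 = g i 0 - (F *m x) i 0 by rewrite /r divfK ?gt_eqF.
  have : 0 <= r i by rewrite divr_ge0 // ?subr_ge0 ?(ltW Pi) ?ltW.
  move=> ri _; have := Sx j.
  have : r i * (F *m v) j 0 <= 0 by rewrite mulr_ge0_le0.
  lra.
apply: proper_card; apply/properP; split.
  apply/fintype.subsetP => j; rewrite !inE Fxj => h.
  rewrite lt_neqAle Sx andbT; apply/eqP => /[dup] e /tight e2.
  by move: h; rewrite e2 mulr0 addr0 e ltxx.
exists i; first by rewrite inE.
rewrite inE Fxj /r divfK ?gt_eqF //.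
by rewrite addrC subrK ltxx.
Qed.

Lemma decomp (x : 'cV[R]_n) : S x -> ~ is_vertex S x ->
  exists x1 x2 (a b : R), [/\ S x1, S x2, (nt x1 < nt x)%N & (nt x2 < nt x)%N]
    /\ [/\ 0 <= a, 0 <= b, a + b = 1 & x = a *: x1 + b *: x2].
Proof.
move=> Sx nv.
have [y [z [lam [Sy [Sz [l0 [l1 [xE yz]]]]]]]] : exists y z lam, S y /\ S z /\
    0 < lam /\ lam < 1 /\ x = lam *: y + (1 - lam) *: z /\ y != z.
  apply: contrapT => H; apply: nv; split => // y z lam Sy Sz l0 l1 xE.
  apply/eqP; apply/negPn/negP => yz; apply: H.
  by exists y, z, lam.
pose v := y - z.
have v0 : v != 0 by rewrite subr_eq0.
have tight i : (F *m x) i 0 = g i 0 -> (F *m v) i 0 = 0.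
  have Fv : (F *m v) i 0 = (F *m y) i 0 - (F *m z) i 0.
    by rewrite /v mulmxBr !mxE.
  rewrite xE polyP_entry Fv => e.
  have := Sy i; have := Sz i => hz hy.
  have h1 : 0 <= lam * (g i 0 - (F *m y) i 0) by rewrite mulr_ge0 ?subr_ge0 // ltW.
  have h2 : 0 <= (1 - lam) * (g i 0 - (F *m z) i 0).
    by rewrite mulr_ge0 ?subr_ge0 // ltW.
  have h0 : lam * (g i 0 - (F *m y) i 0) + (1 - lam) * (g i 0 - (F *m z) i 0) = 0.
    by rewrite -e; ring.
  have h3 : lam * (g i 0 - (F *m y) i 0) = 0 by lra.
  have h3' : (1 - lam) * (g i 0 - (F *m z) i 0) = 0 by lra.
  move/eqP: h3; rewrite mulf_eq0 gt_eqF //= subr_eq0 => /eqP h4.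
  move/eqP: h3'; rewrite mulf_eq0 subr_eq0 (gt_eqF l1) /= => /eqP h5.
  lra.
have tightN i : (F *m x) i 0 = g i 0 -> (F *m (- v)) i 0 = 0.
  move=> /tight h.
  have -> : (F *m (- v)) i 0 = - (F *m v) i 0 by rewrite mulmxN !mxE.
  by rewrite h oppr0.
have [t1 [t10 [S1 n1]]] := step Sx tight (unbounded_dir Sx v0).
have v0N : - v != 0 by rewrite oppr_eq0.
have [t2 [t20 [S2 n2]]] := step Sx tightN (unbounded_dir Sx (v0N : - v != 0)).
exists (x + t1 *: v), (x + t2 *: - v), (t2 / (t1 + t2)), (t1 / (t1 + t2)).
split; first by [].
have t12 : t1 + t2 != 0 by rewrite gt_eqF // addr_gt0.
split.
- by rewrite divr_ge0 // ltW // addr_gt0.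
- by rewrite divr_ge0 // ltW // addr_gt0.
- by field.
- apply/matrixP => i j; rewrite !mxE; field => //.
Qed.

Lemma vertex_rep (x : 'cV[R]_n) : is_vertex S x -> exists w : 'I_N -> R,
  (forall i, 0 <= w i) /\ \sum_i w i = 1 /\ \sum_i w i *: xs i = x.
Proof.
move=> /(proj2 vert x) [j ->].
exists (fun i => (i == j)%:R); split; first by move=> i; rewrite ler0n.
split.
  by rewrite (bigD1 j) //= eqxx big1 ?addr0 // => i /negbTE ->.
rewrite (bigD1 j) //= eqxx scale1r big1 ?addr0 // => i /negbTE ->.
by rewrite scale0r.
Qed.

Lemma minkowski x : S x -> exists w : 'I_N -> R,
  (forall i, 0 <= w i) /\ \sum_i w i = 1 /\ \sum_i w i *: xs i = x.
Proof.
move: {2}(nt x) (leqnn (nt x)) => p.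
elim: p x => [|p IH] x Hp Sx; (have [/vertex_rep //|nv] := pselect (is_vertex S x)).
  have [x1 [x2 [a [b [[_ _ h _] _]]]]] := decomp Sx nv.
  by move: Hp; rewrite leqn0 => /eqP e; rewrite e in h.
have [x1 [x2 [a [b [[S1 S2 h1 h2] [a0 b0 ab xE]]]]]] := decomp Sx nv.
have [w1 [w10 [w11 w1E]]] := IH x1 (leq_trans h1 Hp) S1.
have [w2 [w20 [w21 w2E]]] := IH x2 (leq_trans h2 Hp) S2.
exists (fun i => a * w1 i + b * w2 i); split.
  by move=> i; rewrite addr_ge0 // mulr_ge0.
split.
  by rewrite big_split /= -!mulr_sumr w11 w21 !mulr1.
under eq_bigr do rewrite scalerDl -!scalerA.
by rewrite big_split /= -!scaler_sumr w1E w2E.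
Qed.
End Mink.

Lemma invariance (n m l N : nat) (A : 'cV[R]_l -> 'M[R]_n) (B : 'cV[R]_l -> 'M[R]_(n, m))
  (U : set 'cV[R]_m) (S : set 'cV[R]_n) (xs : 'I_N -> 'cV[R]_n)
  (c : Mset R m l N) (dl : 'cV[R]_l) :
  Cpolytope U -> Cpolytope S -> vertices_of S xs -> Lset A B U S xs dl c ->
  vertex_law_invariant (A dl) (B dl) U S xs (fun i => c.1 i *m dl + c.2 i).
Proof.
move=> [[_ [_ U0]] [kU [FU [gU UE]]]] [[_ [Sb S0]] [kS [FS [gS SE]]]] vert Lc.
have U0' : U 0 by apply: nbhs_singleton.
have S0' : S 0 by apply: nbhs_singleton.
have [M HM] : exists M : R, forall x, S x -> `|x| <= M.
  by case: Sb => M0 [_ HM]; exists (M0 + 1) => x Sx; apply: HM => //; lra.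
subst U S.
set us := fun i => c.1 i *m dl + c.2 i.
have key (x0 : 'cV[R]_n) (g0 : 'I_N -> R) : polyP FS gS x0 -> vargmin xs x0 g0 ->
    polyP FU gU (\sum_i g0 i *: us i) /\
    polyP FS gS (A dl *m x0 + B dl *m (\sum_i g0 i *: us i)).
  move=> Sx [[g01 gE] gmin].
  have [w [w0 [w1 wE]]] := @minkowski kS n N FS gS xs (ex_intro _ M HM) vert x0 Sx.
  have wle i : 0 <= w i <= 1.
    rewrite w0 /= -w1 (bigD1 i) //= lerDl; apply: sumr_ge0 => *; exact: w0.
  have gs : \sum_i g0 i <= 1 by rewrite -w1; apply: gmin.
  have g0p i : 0 <= g0 i by case/andP: (g01 i).
  split; first by apply: polyP_comb => // i; case: (Lc i).
  have -> : A dl *m x0 + B dl *m (\sum_i g0 i *: us i) =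
      \sum_i g0 i *: (A dl *m xs i + B dl *m us i).
    rewrite -gE !mulmx_sumr -big_split /=; apply: eq_bigr => i _.
    by rewrite [RHS]scalerDr !scalemxAr.
  by apply: polyP_comb => // i; case: (Lc i).
move=> Tf x g Sx0 Hst.
have Sx t : (t <= Tf)%N -> polyP FS gS (x t).
  elim: t => [//|t IH] ht.
  have ht' : (t < Tf)%N by [].
  have [vg xE] := Hst t ht'.
  by rewrite xE; apply: (proj2 (key _ _ (IH (ltnW ht')) vg)).
split; first exact: Sx.
move=> t ht; have [vg _] := Hst t ht.
exact: (proj1 (key _ _ (Sx t (ltnW ht)) vg)).
Qed.
End PartA.

Lemma bigsetI_P (I : finType) (U : Type) (p : pred I) (F : I -> set U) x :
  (\big[setI/setT]_(i | p i) F i) x <-> (forall i, p i -> F i x).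
Proof.
split.
  by move=> h i pi; move: h; rewrite (bigD1 i) //= => -[].
move=> h; apply: (big_rec (fun X : set U => X x)) => // i X pi hX.
by split => //; exact: h.
Qed.

Section PartB.
Local Open Scope ereal_scope.
Variables (R : realType) (d : measure_display) (T : measurableType d).
Variable (P : probability T R).

Definition rect (k : nat) (Af : 'I_k -> set T) : set (k.-tuple T) :=
  [set t | forall i, Af i (tnth t i)].

Lemma rect_measurable k (Af : 'I_k -> set T) :
  (forall i, measurable (Af i)) -> measurable (rect Af).
Proof.
move=> mA.
have -> : rect Af = \big[setI/setT]_(i < k) ((@tnth k T)^~ i @^-1` Af i).
  apply/seteqP; split => t /=.
    move=> Ht; elim/big_ind: _ => // i _; exact: Ht.
  move=> Ht i; move: Ht; rewrite (bigD1 i) //= => -[].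
  by [].
apply: bigsetI_measurable => i _.
by rewrite -[X in measurable X]setTI; apply: measurable_tnth.
Qed.

Definition rects (k : nat) : set (set (k.-tuple T)) :=
  [set X | exists Af : 'I_k -> set T, (forall i, measurable (Af i)) /\ X = rect Af].

Lemma tuple_gen k : @measurable _ (k.-tuple T) = <<s @rects k >>.
Proof.
apply/seteqP; split.
  rewrite /measurable /=.
  apply: smallest_sub; first exact: smallest_sigma_algebra.
  elim/big_ind: _.
  - by [].
  - by move=> X Y hX hY Z [/hX|/hY].
  move=> i _ X [A mA <-]; apply: sub_sigma_algebra.
  exists (fun j => if j == i then A else setT); split.
    by move=> j; case: (j == i).
  apply/seteqP; split => t /=.
    move=> [_ h] j; case: eqP => [->|//]; exact: h.
  by move=> h; split => //; have := h i; rewrite eqxx.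
apply: smallest_sub; first exact: sigma_algebra_measurable.
by move=> _ [Af [mA ->]]; apply: rect_measurable.
Qed.

Section Mix.
Variables (K : nat) (Q : probability (K.-tuple T) R).
Hypothesis HQ : is_product_prob P Q.
Variable I : {set 'I_K}.

Definition mix (p : K.-tuple T * K.-tuple T) : K.-tuple T :=
  [tuple if i \in I then tnth p.1 i else tnth p.2 i | i < K].

Lemma mix_measurable : measurable_fun setT mix.
Proof.
apply/measurable_fun_tnthP => i.
have -> : ((@tnth K T)^~ i \o mix) =
    (if i \in I then ((@tnth K T)^~ i \o fst) else ((@tnth K T)^~ i \o snd)).
  by apply/funext => p; rewrite /= tnth_mktuple; case: (i \in I).
by case: (i \in I); apply: measurableT_comp => //; exact: measurable_tnth.
Qed.

Definition mixM (B : set (K.-tuple T)) := (Q \x Q) (mix @^-1` B).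

Let mixM0 : mixM set0 = 0.
Proof. by rewrite /mixM preimage_set0 measure0. Qed.

Let mixM_ge0 B : 0 <= mixM B.
Proof. exact: measure_ge0. Qed.

Let mixM_sigma_additive : semi_sigma_additive mixM.
Proof.
move=> F mF tF mUF; rewrite /mixM preimage_bigcup.
apply: measure_semi_sigma_additive.
- by move=> n; rewrite -[X in measurable X]setTI; exact: mix_measurable.
- apply/trivIsetP => /= i j _ _ ij; rewrite -preimage_setI.
  by move/trivIsetP : tF => /(_ _ _ _ _ ij) ->//; rewrite preimage_set0.
- by rewrite -preimage_bigcup -[X in measurable X]setTI; exact: mix_measurable.
Qed.

HB.instance Definition _ := isMeasure.Build _ _ _ mixM
  mixM0 mixM_ge0 mixM_sigma_additive.

Lemma mixM_rect (Af : 'I_K -> set T) : (forall i, measurable (Af i)) ->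
  mixM (rect Af) = Q (rect Af).
Proof.
move=> mA.
pose A1 i := if i \in I then Af i else setT.
pose A2 i := if i \in I then setT else Af i.
have mA1 i : measurable (A1 i) by rewrite /A1; case: (i \in I).
have mA2 i : measurable (A2 i) by rewrite /A2; case: (i \in I).
rewrite /mixM.
have -> : mix @^-1` rect Af = rect A1 `*` rect A2.
  apply/seteqP; split => -[a b] /=.
    move=> h; split => i; have := h i; rewrite tnth_mktuple /A1 /A2 /=;
      by case: (i \in I).
  move=> [h1 h2] i; rewrite tnth_mktuple /=.
  by have := h1 i; have := h2 i; rewrite /A1 /A2; case: (i \in I).
rewrite product_measure1E; try exact: rect_measurable.
transitivity ((\prod_(i < K) P (A1 i)) * \prod_(i < K) P (A2 i)).
  by congr (_ * _); [exact: (HQ mA1) | exact: (HQ mA2)].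
rewrite -big_split /=; symmetry; etransitivity; first exact: (HQ mA).
apply: eq_bigr => i _.
by rewrite /A1 /A2; case: (i \in I); rewrite probability_setT ?mul1e ?mule1.
Qed.

Lemma mixM_eq (B : set (K.-tuple T)) : measurable B -> mixM B = Q B.
Proof.
move=> mB.
apply: (measure_unique (@rects K) (fun=> setT)) => //.
- exact: tuple_gen.
- move=> _ _ [Af [mA ->]] [Bf [mB' ->]].
  exists (fun i => Af i `&` Bf i); split; first by move=> i; exact: measurableI.
  by apply/seteqP; split => t /=; [move=> [h1 h2] i; split|move=> h; split => i; case: (h i)].
- move=> _; exists (fun=> setT); split => //.
  by apply/seteqP; split.
- by rewrite bigcup_const.
- by move=> _ [Af [mA ->]]; apply: mixM_rect.
- move=> _; rewrite /= /mixM /= preimage_setT.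
  rewrite -setXTT product_measure1E //. apply: lte_mul_pinfty => //. exact: fin_num_measure. by rewrite -ge0_fin_numE // fin_num_measure.
Qed.

Section Bound.
Variables (W : set (#|I|.-tuple T * T)) (a : R).
Hypotheses (mW : measurable W) (a0 : (0 <= a)%R).

Definition sub (t : K.-tuple T) : #|I|.-tuple T := map_tuple (tnth t) (enum_tuple I).
Definition Dset := [set c : #|I|.-tuple T | P (xsection W c) < a%:E].
Definition Bset := [set t : K.-tuple T | Dset (sub t) /\
  forall j, j \notin I -> W (sub t, tnth t j)].

Lemma sub_measurable : measurable_fun setT sub.
Proof.
apply/measurable_fun_tnthP => k.
have -> : ((@tnth _ T)^~ k \o sub) = (@tnth K T)^~ (tnth (enum_tuple I) k).
  by apply/funext => t; rewrite /= tnth_map.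
exact: measurable_tnth.
Qed.

Lemma Dset_measurable : measurable Dset.
Proof.
have := @measurable_lte _ _ R setT measurableT (fun c => P (xsection W c))
  (cst a%:E) (measurable_fun_xsection P mW) (measurable_cst _).
by rewrite setTI.
Qed.

Lemma Bset_measurable : measurable Bset.
Proof.
have -> : Bset = sub @^-1` Dset `&`
    \big[setI/setT]_(j < K | j \notin I) ((fun t => (sub t, tnth t j)) @^-1` W).
  apply/seteqP; split => t /=.
    by move=> [hD hW]; split => //; apply/bigsetI_P => j /hW.
  by move=> [hD /bigsetI_P hW]; split => // j /hW.
apply: measurableI.
  by rewrite -[X in measurable X]setTI; apply: sub_measurable => //; exact: Dset_measurable.
apply: bigsetI_measurable => j _.
rewrite -[X in measurable X]setTI; apply: measurable_fun_pair => //.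
  exact: sub_measurable.
exact: measurable_tnth.
Qed.

Lemma sub_mix (x y : K.-tuple T) : sub (mix (x, y)) = sub x.
Proof.
apply: eq_from_tnth => k; rewrite !tnth_map !tnth_ord_tuple /=.
have -> : tnth (enum_tuple I) k \in I by rewrite -mem_enum; apply: mem_tnth.
by [].
Qed.

Lemma Q_Bset : Q Bset <= (a ^+ (K - #|I|))%:E.
Proof.
rewrite -(mixM_eq Bset_measurable) /mixM /product_measure1.
have mB : measurable (mix @^-1` Bset).
  by rewrite -[X in measurable X]setTI; apply: mix_measurable => //; exact: Bset_measurable.
apply: (le_trans (y := \int[Q]_x cst (a ^+ (K - #|I|))%:E x)); last first.
  rewrite integral_cst //.
  have -> : (Q : {measure set (K.-tuple T) -> \bar R}) setT = 1 by exact: probability_setT.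
  by rewrite mule1.
apply: ge0_le_integral => //.
- exact: measurable_fun_xsection.
- move=> x _ /=.
  have [Dx|nDx] := pselect (Dset (sub x)); last first.
    apply: (le_trans (y := Q set0)); last by rewrite measure0 lee_fin exprn_ge0.
    apply: le_measure; rewrite ?inE //; first exact: measurable_xsection.
    move=> b; rewrite /xsection /= inE /= => -[hD _].
    by apply: nDx; rewrite -(sub_mix x b).
  pose Af j := if j \in I then setT else xsection W (sub x).
  have mAf j : measurable (Af j).
    by rewrite /Af; case: (j \in I) => //; exact: measurable_xsection.
  apply: (le_trans (y := Q (rect Af))).
    apply: le_measure; rewrite ?inE //; [exact: measurable_xsection | exact: rect_measurable |].
    move=> b; rewrite /xsection /= inE /= => -[_ hW] j; rewrite /Af.
    case: ifP => // /negbT jI.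
    have := hW j jI; rewrite sub_mix tnth_mktuple /= (negbTE jI) => h.
    by rewrite /xsection /=; apply/mem_set.
  have -> : (Q : {measure set (K.-tuple T) -> \bar R}) (rect Af) = \prod_(j < K) P (Af j) by exact: HQ.
  have pfin : P (xsection W (sub x)) \is a fin_num by apply: fin_num_measure; exact: measurable_xsection.
  have pE : P (xsection W (sub x)) = (fine (P (xsection W (sub x))))%:E by rewrite fineK.
  have p0 : (0 <= fine (P (xsection W (sub x))))%R by rewrite fine_ge0.
  have pa : (fine (P (xsection W (sub x))) <= a)%R.
    by rewrite -lee_fin -pE; apply: ltW.
  rewrite (eq_bigr (fun j => (if j \in I then 1 else fine (P (xsection W (sub x))))%:E)); last first.
    by move=> j _; rewrite /Af; case: (j \in I); rewrite ?probability_setT // -pE.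
  rewrite prodEFin lee_fin.
  apply: (le_trans (y := (\prod_(j < K) (if j \in I then 1 else a))%R)).
    apply: ler_prod => j _; case: (j \in I) => //=; [by rewrite lexx ler01 | by rewrite p0 pa].
  have -> : (\prod_(j < K) (if j \in I then 1 else a) = \prod_(j in ~: I) a)%R.
    by rewrite [RHS]big_mkcond /=; apply: eq_bigr => j _; rewrite inE; case: (j \in I).
  rewrite prodr_const.
  have hc := cardsC I; rewrite card_ord in hc.
  have -> : (K - #|I| = #|~: I|)%N by rewrite -{1}hc addKn.
  by [].
Qed.
End Bound.
End Mix.
End PartB.

Lemma bigsetU_P (I : finType) (U : Type) (p : pred I) (F : I -> set U) x i :
  p i -> F i x -> (\big[setU/set0]_(i | p i) F i) x.
Proof. by move=> pi Fx; rewrite (bigD1 i) //=; left. Qed.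

Lemma measure_bigU_le d (T : measurableType d) (R : realType)
  (mu : {measure set T -> \bar R}) (I : finType) (p : pred I) (F : I -> set T) :
  (forall i, measurable (F i)) ->
  (mu (\big[setU/set0]_(i | p i) F i) <= \sum_(i | p i) mu (F i))%E.
Proof.
move=> mF.
suff : measurable (\big[setU/set0]_(i | p i) F i) /\
  (mu (\big[setU/set0]_(i | p i) F i) <= \sum_(i | p i) mu (F i))%E by case.
apply: (big_rec2 (fun X s => measurable X /\ (mu X <= s)%E)).
  by split; rewrite ?measure0.
move=> i X s pi [mX hX]; split; first exact: measurableU.
apply: (le_trans (measureU2 _ (mF i) mX)).
exact: leeD.
Qed.

Lemma In_nth (U : Type) (s : seq U) x0 i : (i < size s)%N -> List.In (nth x0 s i) s.
Proof.
elim: s i => [|y s IH] [|i] //= h; [by left | right; exact: IH].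
Qed.

Lemma In_tnth (U : Type) k (t : k.-tuple U) (j : 'I_k) : List.In (tnth t j) t.
Proof. by rewrite (tnth_nth (tnth_default t j)); apply: In_nth; rewrite size_tuple. Qed.

Lemma sum_subsets (R : realType) K (f : nat -> R) :
  \sum_(I : {set 'I_K} | (#|I| < K)%N) f #|I| =
  \sum_(h < K) ('C(K, h))%:R * f h.
Proof.
transitivity (\sum_(I : {set 'I_K}) \sum_(h < K) (if #|I| == h then f h else 0)).
  rewrite big_mkcond /=; apply: eq_bigr => I _.
  have [hI|hI] := ltnP #|I| K.
    rewrite -big_mkcond /= (big_pred1 (Ordinal hI)) //.
  rewrite big1 // => h _.
  by rewrite (_ : (#|I| == h) = false) // gtn_eqF // (leq_trans (ltn_ord h) hI).
rewrite exchange_big /=; apply: eq_bigr => h _.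
rewrite -big_mkcond /= sumr_const.
have -> : #|[pred I : {set 'I_K} | #|I| == h]| = 'C(K, h).
  by have := card_draws 'I_K h; rewrite card_ord => <-; apply: eq_card => I; rewrite !inE.
by rewrite mulr_natl.
Qed.

Theorem corollary1 (R : realType) (n m l N K : nat)
  (d : measure_display) (T : measurableType d) (P : probability T R)
  (iota : T -> 'cV[R]_l)
  (A : 'cV[R]_l -> 'M[R]_n) (B : 'cV[R]_l -> 'M[R]_(n, m))
  (X : set 'cV[R]_n) (U : set 'cV[R]_m) (S : set 'cV[R]_n)
  (xs : 'I_N -> 'cV[R]_n) (beta : R) (eps : nat -> R)
  (Theta : seq T -> Mset R m l N) (Ups : K.-tuple T -> {set 'I_K})
  (Q : probability (K.-tuple T) R) :
  (* Delta = range iota is a subset of R^l *)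
  injective iota ->
  Cset X -> Cpolytope U -> Cpolytope S -> S `<=` X -> vertices_of S xs ->
  0 < beta < 1 ->
  (forall h, (h <= K)%N -> 0 <= eps h <= 1) -> eps K = 1 ->
  \sum_(h < K) ('C(K, h))%:R * (1 - eps h) ^+ (K - h) = beta ->
  (* L_{delta_K} is nonempty for every delta_K *)
  (forall dK : K.-tuple T, Lseq iota A B U S xs dK !=set0) ->
  (* Theta_p is a tie-break map selecting an element of L of its argument *)
  (forall s : seq T, Lseq iota A B U S xs s !=set0 ->
     Lseq iota A B U S xs s (Theta s)) ->
  (* Ups_K returns the index set of a support subsample *)
  (forall dK : K.-tuple T,
     Theta [seq tnth dK i | i <- enum (Ups dK)] = Theta dK) ->
  (* Q is the product probability P^K *)
  is_product_prob P Q ->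
  (* implicit measurability of the events involved *)
  (forall p : nat, (p <= K)%N ->
     measurable [set z : p.-tuple T * T | Lset A B U S xs (iota z.2) (Theta z.1)]) ->
  exists E : set (K.-tuple T), measurable E /\ ((1 - beta)%:E <= Q E)%E /\
    forall dK : K.-tuple T, E dK ->
      exists G : set T, measurable G /\ ((1 - eps #|Ups dK|)%:E <= P G)%E /\
        G `<=` [set dl : T | vertex_law_invariant (A (iota dl)) (B (iota dl)) U S xs
                  (fun i => (Theta dK).1 i *m iota dl + (Theta dK).2 i)].
Proof.
move=> _ _ CU CS _ vert /andP[b0 b1] eps01 epsK sumeq Lne ThetaL UpsH HQ mW.
pose WI (I : {set 'I_K}) : set (#|I|.-tuple T * T) :=
  [set z : #|I|.-tuple T * T | Lset A B U S xs (iota z.2) (Theta z.1)].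
have cardI (I : {set 'I_K}) : (#|I| <= K)%N by rewrite -[X in (_ <= X)%N](card_ord K) max_card.
have mWI I : measurable (WI I) by exact: (mW #|I| (cardI I)).
pose aI (I : {set 'I_K}) := 1 - eps #|I|.
have aI0 I : 0 <= aI I by rewrite /aI subr_ge0; case/andP: (eps01 _ (cardI I)).
pose BI I := Bset P (WI I) (aI I).
pose Ebad := \big[setU/set0]_(I : {set 'I_K} | (#|I| < K)%N) BI I.
have mBI I : measurable (BI I) by exact: Bset_measurable.
have mEbad : measurable Ebad by apply: bigsetU_measurable => I _.
have ThK (dK : K.-tuple T) : Lseq iota A B U S xs dK (Theta dK) by apply: ThetaL; exact: Lne.
pose WK : set (K.-tuple T * T) := [set z : K.-tuple T * T | Lset A B U S xs (iota z.2) (Theta z.1)].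
have mWK : measurable WK by exact: (mW K (leqnn K)).
exists (~` Ebad); split; first exact: measurableC.
split.
  rewrite probability_setC //.
  have hle : (Q Ebad <= beta%:E)%E.
    apply: (le_trans (measure_bigU_le Q _ mBI)).
    rewrite -sumeq -(sum_subsets K (fun h => (1 - eps h) ^+ (K - h))) /= -sumEFin.
    by apply: lee_sum => I _; exact: Q_Bset.
  have qfin : Q Ebad \is a fin_num by exact: fin_num_measure.
  rewrite -(fineK qfin) -EFinB lee_fin.
  rewrite -(fineK qfin) lee_fin in hle.
  by rewrite lerB.
move=> dK EdK.
exists (xsection WK dK); split; first exact: measurable_xsection.
split; last first.
  move=> dl; rewrite /xsection /= in_setE /= => L.
  exact: invariance CU CS vert L.
set I := Ups dK.
have [hI|hI] := ltnP #|I| K; last first.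
  have -> : #|I| = K by apply/eqP; rewrite eqn_leq cardI.
  by rewrite epsK subrr measure_ge0.
have hT : Theta (sub I dK) = Theta dK by exact: UpsH.
rewrite leNgt; apply/negP => hlt; apply: EdK.
apply: (bigsetU_P (i := I) hI).
split.
  rewrite /Dset /=.
  have -> : xsection (WI I) (sub I dK) = xsection WK dK.
    by apply/seteqP; split => dl; rewrite /xsection /= !in_setE /WI /WK /= hT.
  exact: hlt.
move=> j jI; rewrite /WI /= hT.
apply: ThK; exact: In_tnth.
Qed.
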